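(* Let $\boldsymbol\alpha,\boldsymbol\beta$ be multisets of $d$ rational numbers and $q$ a prime power with $(q-1)\alpha_i,(q-1)\beta_j\in\mathbb{Z}$. For every integer $m$, the quotients $$\frac{\prod_{i=1}^dg(m+\alpha_i\bar q)g(-m-\beta_i\bar q)}{g(|\boldsymbol\alpha-\boldsymbol\beta|\bar q)}\quad\text{and}\quad\frac{\prod_{i=1}^dg(m+\alpha_i\bar q)g(-m-\beta_i\bar q)}{\prod_{i=1}^dg((\alpha_i-\beta_i)\bar q)}$$ are algebraic integers lying in $\mathbb{Q}(\zeta_{q-1})$, where $|\boldsymbol\alpha-\boldsymbol\beta|=\sum_i(\alpha_i-\beta_i)$ and $\zeta_{q-1}$ is a primitive $(q-1)$-th root of unity.
   Context: Fix a nontrivial additive character $\psi_q$ of $\mathbb{F}_q$, a generator $\omega$ of the character group of $\mathbb{F}_q^\times$, $g(m)=\sum_{x\in\mathbb{F}_q^\times}\omega(x)^m\psi_q(x)$ for $m\in\mathbb{Z}$, and $\bar q=q-1$. *)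

(* Defs.v *)
From HB Require Import structures.
From mathcomp Require Import all_boot all_order all_algebra all_field.
Set Implicit Arguments. Unset Strict Implicit. Unset Printing Implicit Defensive.
Import Order.TTheory GRing.Theory Num.Theory.
Local Open Scope ring_scope.

Definition gauss (F : finFieldType) (psi omega : F -> algC) (m : int) : algC :=
  \sum_(x : F | x != 0) (omega x) ^ m * psi x.

Definition nontriv_add_char (F : finFieldType) (psi : F -> algC) : Prop :=
  [/\ psi 0 = 1, (forall x y, psi (x + y) = psi x * psi y) & exists x, psi x != 1].

(* omega is a multiplicative character of F^x generating the character group
   (of order q-1): omega^k is trivial on F^x only if (q-1) | k. *)
Definition gen_mult_char (F : finFieldType) (omega : F -> algC) : Prop :=
  [/\ omega 1 = 1,
      (forall x y, x != 0 -> y != 0 -> omega (x * y) = omega x * omega y) &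
      (forall k : nat, (forall x : F, x != 0 -> omega x ^+ k = 1) ->
                       (#|F|.-1 %| k)%N)].

Definition in_Qzeta (n : nat) (x : algC) : Prop :=
  exists2 z : algC, n.-primitive_root z &
    exists p : {poly rat}, x = (map_poly ratr p).[z].

Definition is_intQ (r : rat) : bool := r \is a Num.int.

(* Main.v *)
Require Import Defs.
From HB Require Import structures.
From mathcomp Require Import all_boot all_order all_algebra all_field.
From mathcomp Require Import algC algnum ring.
Set Implicit Arguments. Unset Strict Implicit. Unset Printing Implicit Defensive.
Import Order.TTheory GRing.Theory Num.Theory.
Local Open Scope ring_scope.

Definition good (z : algC) (x : algC) : Prop :=
  x \in Aint /\ exists p : {poly rat}, x = (map_poly ratr p).[z].

Lemma good0 z : good z 0.
Proof. split; first exact: rpred0. by exists 0; rewrite raddf0 horner0. Qed.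

Lemma good1 z : good z 1.
Proof. split; first exact: rpred1. by exists 1; rewrite rmorph1 hornerC. Qed.

Lemma goodD z x y : good z x -> good z y -> good z (x + y).
Proof.
move=> [ax [p px]] [ay [r ry]]; split; first exact: rpredD.
by exists (p + r); rewrite raddfD hornerD px ry.
Qed.

Lemma goodN z x : good z x -> good z (- x).
Proof.
move=> [ax [p px]]; split; first by rewrite -mulN1r rpredM // (Aint_int (-1)).
by exists (- p); rewrite raddfN hornerN px.
Qed.

Lemma goodM z x y : good z x -> good z y -> good z (x * y).
Proof.
move=> [ax [p px]] [ay [r ry]]; split; first exact: rpredM.
by exists (p * r); rewrite rmorphM hornerM px ry.
Qed.

Lemma goodn z n : good z n%:R.
Proof. elim: n => [|n IH]; first exact: good0. by rewrite mulrS; apply: goodD (good1 _) IH. Qed.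

Lemma good_root n z y : (0 < n)%N -> n.-primitive_root z -> y ^+ n = 1 -> good z y.
Proof.
move=> n0 pz yn; split.
  by apply: (Aint_unity_root n0); apply/unity_rootP.
have [i ->] := prim_rootP pz yn.
by exists ('X^i); rewrite map_polyXn hornerXn.
Qed.

Lemma good_prod z (I : finType) (P : pred I) (f : I -> algC) :
  (forall i, P i -> good z (f i)) -> good z (\prod_(i | P i) f i).
Proof. move=> H; apply: big_ind => //; [exact: good1 | exact: goodM]. Qed.

Lemma good_sum z (I : finType) (P : pred I) (f : I -> algC) :
  (forall i, P i -> good z (f i)) -> good z (\sum_(i | P i) f i).
Proof. move=> H; apply: big_ind => //; [exact: good0 | exact: goodD]. Qed.
Lemma n_gt0 (F : finFieldType) : (0 < #|F|.-1)%N.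
Proof. by have := finNzRing_gt1 F; case: #|F| => [|[|]]. Qed.

Lemma xn1 (F : finFieldType) (x : F) : x != 0 -> x ^+ #|F|.-1 = 1.
Proof.
move=> xnz; have := expf_card x.
have -> : #|F| = (#|F|.-1).+1 by have := finNzRing_gt1 F; case: #|F|.
rewrite exprSr => h; apply: (mulIf xnz); by rewrite h mul1r.
Qed.

Lemma omX (F : finFieldType) (omega : F -> algC) (Ho : gen_mult_char omega)
  (x : F) k : x != 0 -> omega (x ^+ k) = omega x ^+ k.
Proof.
case: Ho => o1 oM _ xnz; elim: k => [|k IH]; first by rewrite !expr0.
by rewrite !exprS oM ?IH // expf_neq0.
Qed.

Lemma omn (F : finFieldType) (omega : F -> algC) (Ho : gen_mult_char omega)
  (x : F) : x != 0 -> omega x ^+ #|F|.-1 = 1.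
Proof. move=> xnz; rewrite -omX // xn1 //; by case: Ho. Qed.

Lemma omnz (F : finFieldType) (omega : F -> algC) (Ho : gen_mult_char omega)
  (x : F) : x != 0 -> omega x != 0.
Proof.
move=> xnz; apply/eqP => o0; have := omn Ho xnz.
by rewrite o0 expr0n eqn0Ngt n_gt0 /= => /eqP; rewrite eq_sym oner_eq0.
Qed.

Lemma omz (F : finFieldType) (omega : F -> algC) (Ho : gen_mult_char omega)
  (x : F) (k : int) : x != 0 -> (omega x ^ k) ^+ #|F|.-1 = 1.
Proof.
move=> xnz; have -> : (omega x ^ k) ^+ #|F|.-1 = (omega x ^ k) ^ (#|F|.-1)%:Z by [].
rewrite exprzAC; have -> : omega x ^ (#|F|.-1)%:Z = 1 by exact: (omn Ho xnz).
by rewrite exp1rz.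
Qed.

Lemma omM (F : finFieldType) (omega : F -> algC) (Ho : gen_mult_char omega)
  (x y : F) (k : int) : x != 0 -> y != 0 ->
  omega (x * y) ^ k = omega x ^ k * omega y ^ k.
Proof.
move=> xnz ynz; have [_ oM _] := Ho.
by rewrite oM // exprzMl // unitfE (omnz Ho).
Qed.

Lemma reindex_mul (F : finFieldType) (c : F) (G : F -> algC) : c != 0 ->
  \sum_(x | x != 0) G x = \sum_(x | x != 0) G (c * x).
Proof.
move=> cnz; rewrite (reindex_inj (mulfI cnz)) /=; apply: eq_bigl => x.
by rewrite mulf_eq0 negb_or cnz.
Qed.

Lemma psi_sum (F : finFieldType) (psi : F -> algC) : nontriv_add_char psi ->
  \sum_x psi x = 0.
Proof.
case=> p0 pD [x0 px0].
have h : \sum_x psi x = psi x0 * \sum_x psi x.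
  by rewrite {1}(reindex_inj (addrI x0)) /= mulr_sumr; apply: eq_bigr => x _; rewrite pD.
have : (1 - psi x0) * \sum_x psi x = 0 by rewrite mulrBl mul1r -h subrr.
by move/eqP; rewrite mulf_eq0 subr_eq0 eq_sym (negPf px0) /= => /eqP.
Qed.

Lemma gauss_triv (F : finFieldType) (psi omega : F -> algC) (c : int) :
  nontriv_add_char psi -> (forall x, x != 0 -> omega x ^ c = 1) ->
  gauss psi omega c = -1.
Proof.
move=> Hp Ht; rewrite /gauss (eq_bigr psi); last by move=> x /Ht ->; rewrite mul1r.
have := psi_sum Hp; rewrite (bigD1 0) //=; case: Hp => -> _ _ h.
by apply/eqP; rewrite -subr_eq0 opprK addrC h.
Qed.

Lemma S_triv (F : finFieldType) (omega : F -> algC) (c : int) :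
  (forall x, x != 0 -> omega x ^ c = 1) ->
  \sum_(x : F | x != 0) omega x ^ c = (#|F|.-1)%:R.
Proof.
move=> Ht; rewrite (eq_bigr (fun _ => 1)); last by move=> x /Ht.
rewrite sumr_const; congr (_ %:R).
by rewrite -(cardC1 0); apply: eq_card => x; rewrite !inE.
Qed.

Lemma S_nontriv (F : finFieldType) (omega : F -> algC) (Ho : gen_mult_char omega)
  (c : int) (x0 : F) : x0 != 0 -> omega x0 ^ c != 1 ->
  \sum_(x : F | x != 0) omega x ^ c = 0.
Proof.
move=> x0nz ox0.
have h : \sum_(x : F | x != 0) omega x ^ c = omega x0 ^ c * \sum_(x : F | x != 0) omega x ^ c.
  rewrite {1}(reindex_mul _ x0nz) mulr_sumr; apply: eq_bigr => x xnz.
  by rewrite (omM Ho).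
have : (1 - omega x0 ^ c) * \sum_(x : F | x != 0) omega x ^ c = 0 by rewrite mulrBl mul1r -h subrr.
by move/eqP; rewrite mulf_eq0 subr_eq0 eq_sym (negPf ox0) /= => /eqP.
Qed.

Lemma gauss_scale (F : finFieldType) (psi omega : F -> algC) (Ho : gen_mult_char omega)
  (c : int) (u : F) : u != 0 ->
  \sum_(x | x != 0) omega x ^ c * psi (x * u) = (omega u ^ c)^-1 * gauss psi omega c.
Proof.
move=> unz; rewrite /gauss (reindex_mul (fun x => omega x ^ c * psi x) unz) mulr_sumr.
apply: eq_bigr => x xnz; rewrite (omM Ho) // -!mulrA mulKf; last first.
  by rewrite expfz_neq0 // (omnz Ho).
by rewrite [u * x]mulrC.
Qed.

Definition Jac (F : finFieldType) (omega : F -> algC) (a b : int) : algC :=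
  \sum_(t | (t != 0) && (t != -1)) omega t ^ b * (omega (1 + t) ^ (a + b))^-1.

Lemma gauss_mul (F : finFieldType) (psi omega : F -> algC)
  (Hp : nontriv_add_char psi) (Ho : gen_mult_char omega) (a b : int) :
  gauss psi omega a * gauss psi omega b =
  omega (-1) ^ b * \sum_(x : F | x != 0) omega x ^ (a + b)
  + Jac omega a b * gauss psi omega (a + b).
Proof.
have [p0 pD _] := Hp.
have unit_om : forall x, x != 0 -> omega x \is a GRing.unit.
  by move=> x xnz; rewrite unitfE (omnz Ho).
rewrite /gauss mulr_suml.
under eq_bigr => x xnz.
  rewrite (reindex_mul _ xnz) mulr_sumr.
  under eq_bigr => t tnz.
    rewrite (omM Ho) //.
    have -> : omega x ^ a * psi x * (omega x ^ b * omega t ^ b * psi (x * t))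
      = omega t ^ b * (omega x ^ (a + b) * psi (x * (1 + t))).
      by rewrite exprzDr ?unit_om // mulrDr mulr1 pD; ring.
    over.
  over.
rewrite /= exchange_big /=.
under eq_bigr => t tnz do rewrite -mulr_sumr.
rewrite (bigD1 (-1)) /=; last by rewrite oppr_eq0 oner_eq0.
congr (_ + _).
  congr (_ * _); apply: eq_bigr => x _; by rewrite subrr mulr0 p0 mulr1.
rewrite /Jac mulr_suml; apply: eq_bigr => t /andP [tnz tn1].
rewrite gauss_scale ?mulrA //.
by rewrite addrC -[1]opprK subr_eq0.
Qed.

Lemma good_om (F : finFieldType) (omega : F -> algC) (Ho : gen_mult_char omega)
  (z : algC) (pz : (#|F|.-1).-primitive_root z) (x : F) (k : int) :
  x != 0 -> good z (omega x ^ k).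
Proof. by move=> xnz; apply: (good_root (n_gt0 F) pz); apply: omz. Qed.

Lemma good_omV (F : finFieldType) (omega : F -> algC) (Ho : gen_mult_char omega)
  (z : algC) (pz : (#|F|.-1).-primitive_root z) (x : F) (k : int) :
  x != 0 -> good z ((omega x ^ k)^-1).
Proof.
by move=> xnz; apply: (good_root (n_gt0 F) pz); rewrite exprVn (omz Ho) // invr1.
Qed.

Lemma good_Jac (F : finFieldType) (omega : F -> algC) (Ho : gen_mult_char omega)
  (z : algC) (pz : (#|F|.-1).-primitive_root z) (a b : int) :
  good z (Jac omega a b).
Proof.
apply: good_sum => t /andP [tnz tn1]; apply: goodM; first exact: good_om.
by apply: good_omV => //; rewrite addrC -[1]opprK subr_eq0.
Qed.

Lemma r_exists (F : finFieldType) (psi omega : F -> algC)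
  (Hp : nontriv_add_char psi) (Ho : gen_mult_char omega)
  (z : algC) (pz : (#|F|.-1).-primitive_root z) (a b : int) :
  exists r, good z r /\ gauss psi omega a * gauss psi omega b = r * gauss psi omega (a + b).
Proof.
have m1nz : (-1 : F) != 0 by rewrite oppr_eq0 oner_eq0.
rewrite (gauss_mul Hp Ho).
case: (boolP [forall x : F, (x != 0) ==> (omega x ^ (a + b) == 1)]) => [/forallP H | /forallPn [x0]].
  have Ht : forall x : F, x != 0 -> omega x ^ (a + b) = 1.
    by move=> x xnz; apply/eqP; move: (H x); rewrite xnz.
  exists (Jac omega a b - omega (-1) ^ b * (#|F|.-1)%:R); split.
    apply: goodD; first exact: good_Jac.
    by apply: goodN; apply: goodM; [exact: good_om | exact: goodn].
  by rewrite (S_triv Ht) (gauss_triv Hp Ht); ring.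
rewrite negb_imply => /andP [x0nz /eqP ox0].
exists (Jac omega a b); split; first exact: good_Jac.
by rewrite (S_nontriv Ho x0nz) ?mulr0 ?add0r //; apply/eqP.
Qed.

Lemma tele1 (F : finFieldType) (psi omega : F -> algC)
  (Hp : nontriv_add_char psi) (Ho : gen_mult_char omega)
  (z : algC) (pz : (#|F|.-1).-primitive_root z) (I : finType) (A B : I -> int) :
  exists R, good z R /\ \prod_i (gauss psi omega (A i) * gauss psi omega (B i))
     = R * gauss psi omega (\sum_i (A i + B i)).
Proof.
pose K (y1 : algC) (y2 : int) := exists R, good z R /\ y1 = R * gauss psi omega y2.
apply: (@big_rec2 _ _ K).
  exists (-1); split; first exact/goodN/good1.
  by rewrite (@gauss_triv _ _ _ 0) // ?mulrNN ?mulr1 // => x _; rewrite expr0z.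
move=> i y1 y2 _ [R [gR ->]].
have [r1 [g1 e1]] := r_exists Hp Ho pz (B i) y2.
have [r2 [g2 e2]] := r_exists Hp Ho pz (A i) (B i + y2).
exists (R * r1 * r2); split; first by apply: goodM => //; apply: goodM.
rewrite -addrA.
have -> : gauss psi omega (A i) * gauss psi omega (B i) * (R * gauss psi omega y2)
  = R * gauss psi omega (A i) * (gauss psi omega (B i) * gauss psi omega y2) by ring.
rewrite e1.
have -> : R * gauss psi omega (A i) * (r1 * gauss psi omega (B i + y2))
  = R * r1 * (gauss psi omega (A i) * gauss psi omega (B i + y2)) by ring.
by rewrite e2; ring.
Qed.

Lemma tele2 (F : finFieldType) (psi omega : F -> algC)
  (Hp : nontriv_add_char psi) (Ho : gen_mult_char omega)
  (z : algC) (pz : (#|F|.-1).-primitive_root z) (I : finType) (A B : I -> int) :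
  exists R, good z R /\ \prod_i (gauss psi omega (A i) * gauss psi omega (B i))
     = R * \prod_i gauss psi omega (A i + B i).
Proof.
pose K (y1 y2 : algC) := exists R, good z R /\ y1 = R * y2.
apply: (@big_rec2 _ _ K).
  by exists 1; split; [exact: good1 | rewrite mul1r].
move=> i y1 y2 _ [R [gR ->]].
have [r1 [g1 e1]] := r_exists Hp Ho pz (A i) (B i).
exists (r1 * R); split; first exact: goodM.
by rewrite e1; ring.
Qed.

Lemma good_div z R G : good z R -> good z (R * G / G).
Proof.
move=> gR; have [->|Gnz] := eqVneq G 0; first by rewrite invr0 mulr0; exact: good0.
by rewrite mulfK.
Qed.

Lemma good_Q (F : finFieldType) z x : (#|F|.-1).-primitive_root z -> good z x ->
  x \in Aint /\ in_Qzeta #|F|.-1 x.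
Proof. by move=> pz [ax [p px]]; split=> //; exists z => //; exists p. Qed.

Theorem mainTheorem8 (F : finFieldType) (psi omega : F -> algC)
    (Hpsi : nontriv_add_char psi) (Homega : gen_mult_char omega)
    (d : nat) (alpha beta : 'I_d -> rat)
    (Halpha : forall i, is_intQ ((#|F|.-1)%:R * alpha i))
    (Hbeta : forall i, is_intQ ((#|F|.-1)%:R * beta i))
    (m : int) :
  let qb : rat := (#|F|.-1)%:R in
  let g := gauss psi omega in
  let num := \prod_(i < d)
      (g (m + Num.floor (alpha i * qb)) * g (- m - Num.floor (beta i * qb))) in
  let q1 := num / g (Num.floor ((\sum_(i < d) (alpha i - beta i)) * qb)) in
  let q2 := num / \prod_(i < d) g (Num.floor ((alpha i - beta i) * qb)) in
  [/\ q1 \in Aint, in_Qzeta #|F|.-1 q1, q2 \in Aint & in_Qzeta #|F|.-1 q2].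
Proof.
move=> qb g num q1 q2.
have [z pz] := C_prim_root_exists (n_gt0 F).
pose A i := m + Num.floor (alpha i * qb).
pose B i := - m - Num.floor (beta i * qb).
have fa : forall i, (Num.floor (alpha i * qb))%:~R = alpha i * qb.
  by move=> i; rewrite floorK // mulrC; exact: Halpha.
have fb : forall i, (Num.floor (beta i * qb))%:~R = beta i * qb.
  by move=> i; rewrite floorK // mulrC; exact: Hbeta.
have Ci : forall i, Num.floor ((alpha i - beta i) * qb) = A i + B i.
  move=> i; rewrite mulrBl -fa -fb -intrB intrKfloor /A /B; ring.
have CS : Num.floor ((\sum_(i < d) (alpha i - beta i)) * qb) = \sum_i (A i + B i).
  rewrite mulr_suml (eq_bigr (fun i => (A i + B i)%:~R)); last first.
    by move=> i _; rewrite mulrBl -fa -fb -intrB /A /B; congr (_ %:~R); ring.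
  by rewrite -rmorph_sum intrKfloor.
have [R1 [g1 e1]] := tele1 Hpsi Homega pz A B.
have [R2 [g2 e2]] := tele2 Hpsi Homega pz A B.
have [h1 h2] : q1 \in Aint /\ in_Qzeta #|F|.-1 q1.
  apply: (good_Q pz); rewrite /q1 /num /g CS -/(A _) -/(B _).
  by rewrite e1; apply: good_div.
have [h3 h4] : q2 \in Aint /\ in_Qzeta #|F|.-1 q2.
  have Den : \prod_(i < d) gauss psi omega (Num.floor ((alpha i - beta i) * qb))
     = \prod_(i < d) gauss psi omega (A i + B i) by apply: eq_bigr => i _; rewrite Ci.
  apply: (good_Q pz); rewrite /q2 /num /g Den -/(A _) -/(B _) e2; exact: good_div.
by split.
Qed.
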